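(* Let $\mathcal{T}$ be a trivalent tree with $n\ge 3$ labelled leaves and $Q_{\mathcal{T}}(sl_3(\mathbb{C}))$ as in the context. For every proper subtree $\mathcal{T}'\subset\mathcal{T}$ there are exactly two minimal generators of $Q_{\mathcal{T}}(sl_3(\mathbb{C}))$ whose support is $\mathcal{T}'$, and every minimal generator arises in this way. Consequently $Q_{\mathcal{T}}(sl_3(\mathbb{C}))$ has exactly $2(2^n-n-1)$ minimal generators.
   Context: A Berenstein–Zelevinsky (BZ) triangle for $sl_3(\mathbb{C})$ is a $9$-tuple of nonnegative integers $(a,b,c,d,e,f,g,h,i)$ placed on the vertices of a triangular diagram with rows $a$; $b\ c$; $d\ e$; $f\ g\ h\ i$, so that the sides of the big triangle, oriented counterclockwise, read: side 1 $=(a,b,d,f)$, side 2 $=(f,g,h,i)$, side 3 $=(i,e,c,a)$, and $b,c,e,h,g,d$ form (in this cyclic order) a central hexagon. The entries satisfy $b+c=g+h$, $c+e=d+g$, $e+h=b+d$. The boundary weight of a side read as $(x_1,x_2,x_3,x_4)$ is $(x_1+x_2)\omega_1+(x_3+x_4)\omega_2$, identified with $(x_1+x_2,x_3+x_4)\in\mathbb{Z}_{\ge0}^2$. Let $\mathcal{T}$ be a tree whose non-leaf vertices (trinodes) all have degree $3$, with leaves labelled $1,\dots,n$. Attach to each trinode $v$ a BZ triangle, with a fixed bijection between its sides (counterclockwise) and the edges at $v$. $Q_{\mathcal{T}}(sl_3(\mathbb{C}))$ is the semigroup under entrywise addition of such assignments such that for each edge joining trinodes $v,v'$, if $v$'s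 side on that edge has boundary weight $(p,q)$ then $v'$'s side on it has boundary weight $(q,p)$. The weight on a leaf edge is the boundary weight of the corresponding side of the adjacent trinode's triangle. The support of $w\in Q_{\mathcal{T}}(sl_3(\mathbb{C}))$ is the set of edges of $\mathcal{T}$ on which the boundary weight of $w$ is nonzero. A subtree $\mathcal{T}'\subset\mathcal{T}$ (connected subgraph with at least one edge) is proper if every leaf of $\mathcal{T}'$ is a leaf of $\mathcal{T}$; proper subtrees correspond to subsets of at least two leaves of $\mathcal{T}$. *)

(* Defs.v *)
From mathcomp Require Import all_boot.
Set Implicit Arguments. Unset Strict Implicit. Unset Printing Implicit Defensive.

Record tritree := TriTree {
  tv : finType;
  tadj : rel tv;
  tadj_sym : symmetric tadj;
  tadj_irr : irreflexive tadj;
  tconn : forall x y : tv, connect tadj x y;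
  tacyc : forall (x : tv) (p : seq tv),
      path tadj x p -> uniq (x :: p) -> 2 <= size p -> ~~ tadj (last x p) x;
  tdeg : forall v : tv, #|[set y | tadj v y]| = 1 \/ #|[set y | tadj v y]| = 3;
  (* side k (k = 0,1,2, counterclockwise) of the triangle at a trinode v
     corresponds to the edge from v to (tside v k) *)
  tside : tv -> 'I_3 -> tv;
  tside_adj : forall v k, #|[set y | tadj v y]| = 3 -> tadj v (tside v k);
  tside_inj : forall v, #|[set y | tadj v y]| = 3 -> injective (tside v)
}.

Definition degree (T : tritree) (v : tv T) := #|[set y | tadj v y]|.
Definition leaves (T : tritree) : {set tv T} := [set v | degree v == 1].
Definition trinode (T : tritree) (v : tv T) := degree v == 3.

(* ---------- BZ triangles: entries a,b,c,d,e,f,g,h,i = indices 0..8 ---------- *)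
Definition bz := {ffun 'I_9 -> nat}.
Definition ent (t : bz) (j : nat) : nat := t (inord j).

Definition hexagon (t : bz) : bool :=
  [&& ent t 1 + ent t 2 == ent t 6 + ent t 7,
      ent t 2 + ent t 4 == ent t 3 + ent t 6
    & ent t 4 + ent t 7 == ent t 1 + ent t 3].

(* sides, read counterclockwise: (a,b,d,f), (f,g,h,i), (i,e,c,a) *)
Definition side_idx (k : 'I_3) : nat * nat * nat * nat :=
  match val k with
  | 0 => (0, 1, 3, 5)
  | 1 => (5, 6, 7, 8)
  | _ => (8, 4, 2, 0)
  end%N.

(* boundary weight (x1+x2) w1 + (x3+x4) w2 of side k *)
Definition bweight (t : bz) (k : 'I_3) : nat * nat :=
  let: (i1, i2, i3, i4) := side_idx k in
  (ent t i1 + ent t i2, ent t i3 + ent t i4)%N.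

(* an assignment gives a BZ triangle at each trinode (and is 0 at leaves) *)
Definition assignment (T : tritree) := {ffun tv T -> bz}.

Definition zero_bz : bz := [ffun _ => 0%N].
Definition zero_assign (T : tritree) : assignment T := [ffun _ => zero_bz].
Definition add_assign (T : tritree) (w u : assignment T) : assignment T :=
  [ffun v => [ffun j => (w v j + u v j)%N]].

Definition inQ (T : tritree) (w : assignment T) : Prop :=
  (forall v, ~~ trinode v -> w v = zero_bz) /\
  (forall v, trinode v -> hexagon (w v)) /\
  (forall v v' (k k' : 'I_3), trinode v -> trinode v' ->
      tside v k = v' -> tside v' k' = v ->
      bweight (w v) k = ((bweight (w v') k').2, (bweight (w v') k').1)).

Definition min_gen (T : tritree) (w : assignment T) : Prop :=
  inQ w /\ w <> zero_assign T /\
  ~ (exists u u', inQ u /\ inQ u' /\ u <> zero_assign T /\ u' <> zero_assign T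
                  /\ w = add_assign u u').

(* ---------- bz_support and proper subtrees (edges as ordered pairs, both orientations) ---------- *)
(* weight of the edge {x,y} seen from x is nonzero (x must be a trinode,
   otherwise w x = 0 and this is false) *)
Definition nz_from (T : tritree) (w : assignment T) (x y : tv T) : bool :=
  [exists k : 'I_3, (tside x k == y) && (bweight (w x) k != (0, 0)%N)].

Definition bz_support (T : tritree) (w : assignment T) : {set tv T * tv T} :=
  [set p | tadj p.1 p.2 && (nz_from w p.1 p.2 || nz_from w p.2 p.1)].

(* subtrees of a tree are induced by their vertex sets *)
Definition sub_edges (T : tritree) (S : {set tv T}) : {set tv T * tv T} :=
  [set p | [&& tadj p.1 p.2, p.1 \in S & p.2 \in S]].

Definition proper_subtree (T : tritree) (S : {set tv T}) : Prop :=
  (2 <= #|S|)%N /\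
  (forall x y, x \in S -> y \in S ->
     connect (fun a b => [&& tadj a b, a \in S & b \in S]) x y) /\
  (forall x, x \in S -> #|[set y in S | tadj x y]| = 1%N -> x \in leaves T).

(* Main.v *)
Require Import Defs.
From mathcomp Require Import all_boot zify.
Set Implicit Arguments. Unset Strict Implicit. Unset Printing Implicit Defensive.

Section Tree.
Variable T : tritree.
Local Notation V := (tv T).
Local Notation adj := (@tadj T).

Lemma adj_sym (x y : V) : adj x y = adj y x. Proof. exact: tadj_sym. Qed.
Lemma adj_irr (x : V) : adj x x = false. Proof. exact: tadj_irr. Qed.
Lemma adj_neq (x y : V) : adj x y -> x != y.
Proof. by apply: contraTneq => ->; rewrite adj_irr. Qed.

Lemma path_all (e : rel V) (P : pred V) x p :
  (forall a b, e a b -> P b) -> path e x p -> all P p.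
Proof.
move=> H; elim: p x => //= y p IH x /andP[exy py].
by rewrite (H _ _ exy) (IH _ py).
Qed.

Lemma no_cycle (x y z : V) : adj x y -> adj x z -> y != z ->
  connect (fun a b => [&& adj a b, a != x & b != x]) y z -> False.
Proof.
move=> axy axz yz /connectP[p ep zE]; subst z.
case/shortenP: ep axz yz => q eq uq _ axz yz.
have Hq : all (fun b => b != x) q.
  by apply: path_all eq => a b /and3P[].
have := @tacyc T x (y :: q); rewrite /= axy (sub_path _ eq); last first.
  by move=> a b /and3P[].
rewrite in_cons negb_or.
have -> : x != y by rewrite adj_neq.
have -> : x \notin q by apply/negP => xq; have := allP Hq x xq; rewrite eqxx.
idtac.
case: q {eq Hq} uq yz axz => [|z q] /= uq; first by rewrite eqxx.
by move=> _ axz /(_ isT uq isT); rewrite adj_sym axz.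
Qed.

Lemma deg2 (y a b : V) : adj y a -> adj y b -> a != b -> 2 <= degree y.
Proof.
move=> ya yb ab; rewrite /degree.
have <- : #|[set a; b]| = 2 by rewrite cards2 ab.
by apply: subset_leq_card; apply/subsetP => u; rewrite !inE => /orP[]/eqP->.
Qed.

Lemma deg_tri (y : V) : 2 <= degree y -> trinode y.
Proof. by rewrite /trinode; case: (tdeg y) => /= h; rewrite /degree h. Qed.

Lemma leaf_or_tri (y : V) : (y \in leaves T) || trinode y.
Proof. by rewrite /trinode inE /degree; case: (tdeg y) => ->. Qed.

Lemma notri_leaf (y : V) : ~~ trinode y -> y \in leaves T.
Proof. by have := leaf_or_tri y; case: (trinode y); rewrite ?orbF. Qed.

Lemma leaf_notri (y : V) : y \in leaves T -> ~~ trinode y.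
Proof. by rewrite inE /trinode => /eqP ->. Qed.

Lemma leaf_uniq (u a b : V) : u \in leaves T -> adj u a -> adj u b -> a = b.
Proof.
move=> lu ua ub; apply/eqP; apply/negP => /negP ab.
by have := deg2 ua ub ab; move: lu; rewrite inE => /eqP ->.
Qed.

Lemma tside_surj (v y : V) : trinode v -> adj v y -> exists k, tside v k = y.
Proof.
move=> tv vy.
have inj := tside_inj (eqP tv).
have sub : [set tside v k | k : 'I_3] \subset [set u | adj v u].
  by apply/subsetP=> u /imsetP[k _ ->]; rewrite inE tside_adj //; exact/eqP.
have E : [set tside v k | k : 'I_3] = [set u | adj v u].
  apply/eqP; rewrite eqEcard sub /= card_imset // card_ord.
  by move/eqP: tv; rewrite /degree => ->.
have : y \in [set tside v k | k : 'I_3] by rewrite E inE.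
by case/imsetP => k _ ->; exists k.
Qed.

Lemma tside_adj' (v : V) k : trinode v -> adj v (tside v k).
Proof. by move=> tv; apply: tside_adj; exact/eqP. Qed.

Lemma tside_inj' (v : V) k k' : trinode v -> tside v k = tside v k' -> k = k'.
Proof. by move=> tv; apply: tside_inj; exact/eqP. Qed.

Lemma exit_edge (e : rel V) (P : pred V) a b :
  connect e a b -> P a -> ~~ P b -> exists x y, [/\ P x, ~~ P y & e x y].
Proof.
move=> /connectP[p ep ->{b}]; elim: p a ep => [|c p IH] a /=; first by move=> _ ->.
move=> /andP[eac ep] Pa; case Pc: (P c).
  by move=> H; exact: (IH c ep Pc H).
by move=> _; exists a, c; rewrite Pa Pc eac.
Qed.

Lemma tri_path (P : pred V) (x : V) p :
  path (fun a b => [&& adj a b, P a & P b]) x p -> uniq (x :: p) ->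
  trinode x -> trinode (last x p) ->
  path (fun a b => [&& adj a b, P a, P b, trinode a & trinode b]) x p.
Proof.
elim: p x => //= y p IH x /andP[/and3P[xy Px Py] ep] /andP[xnin up] tx tl.
have ty : trinode y.
  case: p ep xnin up tl {IH} => [|z q] //= /andP[/and3P[yz _ _] _] xnin _ _.
  apply: deg_tri; apply: (deg2 (a := x) (b := z)); first by rewrite adj_sym.
    by [].
  by apply/eqP => xz; move: xnin; rewrite xz !inE eqxx orbT.
by rewrite xy Px Py tx ty /= IH.
Qed.

Lemma tri_conn (P : pred V) (x y : V) :
  connect (fun a b => [&& adj a b, P a & P b]) x y -> trinode x -> trinode y ->
  connect (fun a b => [&& adj a b, P a, P b, trinode a & trinode b]) x y.
Proof.
move=> /connectP[p ep ->{y}]; case/shortenP: ep => q eq uq _ tx tl.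
by apply/connectP; exists q => //; apply: tri_path.
Qed.

Lemma all_conn (x y : V) : connect (fun a b => [&& adj a b, predT a & predT b]) x y.
Proof.
apply: connect_sub (tconn x y) => a b ab; apply: connect1; by rewrite ab.
Qed.

Lemma closed_last (A : {set V}) u p :
  (forall a b, a \in A -> adj a b -> b \in A) -> u \in A -> path adj u p -> last u p \in A.
Proof.
move=> cl; elim: p u => //= c p IH u Hu /andP[uc ep].
exact: IH (cl _ _ Hu uc) ep.
Qed.

Lemma no_leaf_edge : 3 <= #|leaves T| -> forall l1 l2 : V,
  l1 \in leaves T -> l2 \in leaves T -> adj l1 l2 -> False.
Proof.
move=> n3 l1 l2 L1 L2 a12.
have cl : forall u w, u \in [set l1; l2] -> adj u w -> w \in [set l1; l2].
  move=> u w; rewrite !inE => /orP[]/eqP-> uw.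
    by rewrite (leaf_uniq L1 uw a12) eqxx orbT.
  by rewrite (leaf_uniq L2 uw (_ : adj l2 l1)) ?eqxx // adj_sym.
have all2 : forall x, x \in [set l1; l2].
  move=> x; case/connectP: (tconn l1 x) => p ep ->.
  by apply: closed_last ep => //; rewrite !inE eqxx.
have : #|leaves T| <= #|[set l1; l2]|.
  by apply: subset_leq_card; apply/subsetP => x _; apply: all2.
rewrite cards2; move: n3; case: (l1 != l2) => /=; lia.
Qed.

End Tree.

Section BFS.
Variable T : tritree.
Local Notation V := (tv T).
Local Notation adj := (@tadj T).

Definition swapp (p : nat * nat) := (p.2, p.1).
Definition compat (v v' : V) (g g' : bz) :=
  forall k k', tside v k = v' -> tside v' k' = v -> bweight g k = swapp (bweight g' k').

Lemma compat_sym (v v' : V) g g' : compat v v' g g' -> compat v' v g' g.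
Proof.
move=> H k k' e1 e2; rewrite (H k' k e2 e1) /swapp.
by case: (bweight g' k).
Qed.

Lemma bfs_aux (ok : V -> bz -> Prop) (v0 : V) g0
 (Hext : forall v v' γ, trinode v -> trinode v' -> adj v v' -> ok v γ ->
     exists2 γ', ok v' γ' & compat v v' γ γ') :
 forall m (R : {set V}) (g : assignment T),
  #|[set v | trinode v & v \notin R]| = m -> v0 \in R -> (forall v, v \in R -> trinode v) ->
  (forall a b, a \in R -> b \in R -> connect (fun x z => [&& adj x z, x \in R & z \in R]) a b) ->
  g v0 = g0 -> (forall v, v \in R -> ok v (g v)) ->
  (forall v v', v \in R -> v' \in R -> adj v v' -> compat v v' (g v) (g v')) ->
  exists g' : assignment T, [/\ g' v0 = g0, (forall v, trinode v -> ok v (g' v)),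
     (forall v, ~~ trinode v -> g' v = zero_bz) &
     (forall v v', trinode v -> trinode v' -> adj v v' -> compat v v' (g' v) (g' v'))].
Proof.
move=> m; elim: m => [|m IH] R g Hc v0R RT Rconn g0E okR compR.
- have allR : forall v, trinode v -> v \in R.
    move=> v tv; apply/negPn/negP => vR.
    have : v \in [set v | trinode v & v \notin R] by rewrite inE tv vR.
    by move/eqP: Hc; rewrite cards_eq0 => /eqP ->; rewrite inE.
  exists [ffun v => if trinode v then g v else zero_bz]; split.
  + by rewrite ffunE RT.
  + by move=> v tv; rewrite ffunE tv; apply: okR; apply: allR.
  + by move=> v /negbTE tv; rewrite ffunE tv.
  + by move=> v v' tv tv' vv; rewrite !ffunE tv tv'; apply: compR => //; apply: allR.
- have [y0 Hy0] : exists y, y \in [set v | trinode v & v \notin R].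
    by apply/set0Pn; rewrite -card_gt0 Hc.
  move: Hy0; rewrite inE => /andP[ty0 y0R].
  have := tri_conn (all_conn v0 y0) (RT _ v0R) ty0.
  move/exit_edge => /(_ (fun v => v \in R) v0R y0R) [x [y [xR yR /and5P[xy _ _ tx ty]]]].
  have [g' okg' cxy] := Hext _ _ (g x) tx ty xy (okR _ xR).
  have uniqN : forall x', x' \in R -> adj y x' -> x' = x.
    move=> x' x'R yx'; apply/eqP; apply/negP => /negP nx.
    apply: (@no_cycle T y x' x) => //; first by rewrite adj_sym.
    apply: connect_sub (Rconn _ _ x'R xR) => a b /and3P[ab aR bR].
    apply: connect1; rewrite ab /=; apply/andP; split.
      by apply/negP => /eqP E; move: yR; rewrite -E aR.
    by apply/negP => /eqP E; move: yR; rewrite -E bR.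
  have yNR : forall v, v \in R -> (v == y) = false.
    by move=> v vR; apply/negP => /eqP E; move: yR; rewrite -E vR.
  apply: (IH (y |: R) [ffun v => if v == y then g' else g v]).
  + have E : [set v | trinode v & v \notin y |: R] = [set v | trinode v & v \notin R] :\ y.
      by apply/setP => v; rewrite !inE negb_or andbCA.
    rewrite E; move: (cardsD1 y [set v | trinode v & v \notin R]).
    rewrite Hc inE ty yR /=; lia.
  + by rewrite in_setU1 v0R orbT.
  + by move=> v /setU1P[->|]; [exact: ty | exact: RT].
  + have lift : forall a b, a \in R -> b \in R ->
        connect (fun x z => [&& adj x z, x \in y |: R & z \in y |: R]) a b.
      move=> a b aR bR; apply: connect_sub (Rconn _ _ aR bR) => c d /and3P[cd cR dR].
      by apply: connect1; rewrite cd !in_setU1 cR dR !orbT.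
    have yx : connect (fun x z => [&& adj x z, x \in y |: R & z \in y |: R]) y x.
      by apply: connect1; rewrite adj_sym xy !in_setU1 eqxx xR orbT.
    have xy' : connect (fun x z => [&& adj x z, x \in y |: R & z \in y |: R]) x y.
      by apply: connect1; rewrite xy !in_setU1 eqxx xR orbT.
    move=> a b /setU1P[->|aR] /setU1P[->|bR].
    * exact: connect0.
    * exact: connect_trans yx (lift _ _ xR bR).
    * exact: connect_trans (lift _ _ aR xR) xy'.
    * exact: lift.
  + by rewrite ffunE yNR.
  + move=> v /setU1P[->|vR]; rewrite ffunE ?eqxx //.
    by rewrite yNR //; apply: okR.
  + move=> v v' /setU1P[->|vR] /setU1P[->|v'R] vv; rewrite !ffunE ?eqxx ?yNR //.
    * by rewrite adj_irr in vv.
    * by rewrite (uniqN _ v'R vv); apply: compat_sym.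
    * by rewrite (uniqN _ vR) // adj_sym.
    * exact: compR.
Qed.

Lemma bfs (ok : V -> bz -> Prop) (v0 : V) g0 :
 trinode v0 -> ok v0 g0 ->
 (forall v v' γ, trinode v -> trinode v' -> adj v v' -> ok v γ ->
     exists2 γ', ok v' γ' & compat v v' γ γ') ->
  exists g' : assignment T, [/\ g' v0 = g0, (forall v, trinode v -> ok v (g' v)),
     (forall v, ~~ trinode v -> g' v = zero_bz) &
     (forall v v', trinode v -> trinode v' -> adj v v' -> compat v v' (g' v) (g' v'))].
Proof.
move=> t0 ok0 Hext.
apply: (bfs_aux Hext (erefl _) (R := [set v0]) (g := [ffun _ => g0])).
- by rewrite set11.
- by move=> v /set1P ->.
- by move=> a b /set1P -> /set1P ->; apply: connect0.
- by rewrite ffunE.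
- by move=> v /set1P ->; rewrite ffunE.
- by move=> v v' /set1P -> /set1P ->; rewrite adj_irr.
Qed.

End BFS.

Arguments ent : simpl never.

Definition mkbz (l : seq nat) : bz := [ffun j : 'I_9 => nth 0 l j].
Lemma ent_mk l j : j < 9 -> ent (mkbz l) j = nth 0 l j.
Proof. by move=> hj; rewrite /ent ffunE inordK. Qed.
Lemma ent_ord (t : bz) (j : 'I_9) : ent t j = t j.
Proof. by rewrite /ent inord_val. Qed.
Lemma ent_zero j : ent zero_bz j = 0.
Proof. by rewrite /ent ffunE. Qed.
Lemma bz_ext (t u : bz) : (forall j, j < 9 -> ent t j = ent u j) -> t = u.
Proof. by move=> H; apply/ffunP => j; rewrite -!ent_ord H. Qed.

Definition k0 : 'I_3 := @Ordinal 3 0 isT.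
Definition k1 : 'I_3 := @Ordinal 3 1 isT.
Definition k2 : 'I_3 := @Ordinal 3 2 isT.
Lemma ord3_cases (k : 'I_3) : k = k0 \/ k = k1 \/ k = k2.
Proof.
case: k => [[|[|[|m]]] hm]; [left|right;left|right;right|by []]; exact: val_inj.
Qed.

Definition wtE (t : bz) (m : nat) : nat * nat :=
  match m with
  | 0 => (ent t 0 + ent t 1, ent t 3 + ent t 5)
  | 1 => (ent t 5 + ent t 6, ent t 7 + ent t 8)
  | _ => (ent t 8 + ent t 4, ent t 2 + ent t 0)
  end.
Lemma bwE t (k : 'I_3) : bweight t k = wtE t k.
Proof. by rewrite /bweight /side_idx; case: k => [[|[|[|m]]] hm]. Qed.

Lemma hexE t : hexagon t ->
  [/\ ent t 1 + ent t 2 = ent t 6 + ent t 7, ent t 2 + ent t 4 = ent t 3 + ent t 6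
    & ent t 4 + ent t 7 = ent t 1 + ent t 3].
Proof. by case/and3P => /eqP ? /eqP ? /eqP ?. Qed.

Lemma hexI t : ent t 1 + ent t 2 = ent t 6 + ent t 7 -> ent t 2 + ent t 4 = ent t 3 + ent t 6
    -> ent t 4 + ent t 7 = ent t 1 + ent t 3 -> hexagon t.
Proof. by move=> h1 h2 h3; rewrite /hexagon h1 h2 h3 !eqxx. Qed.

Inductive G := GA | GF | GI | GDE | GCG | GBH | GBEG | GCDH.
Definition gl (i : G) : seq nat :=
  match i with
  | GA => [:: 1;0;0;0;0;0;0;0;0]
  | GF => [:: 0;0;0;0;0;1;0;0;0]
  | GI => [:: 0;0;0;0;0;0;0;0;1]
  | GDE => [:: 0;0;0;1;1;0;0;0;0]
  | GCG => [:: 0;0;1;0;0;0;1;0;0]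
  | GBH => [:: 0;1;0;0;0;0;0;1;0]
  | GBEG => [:: 0;1;0;0;1;0;1;0;0]
  | GCDH => [:: 0;0;1;1;0;0;0;1;0]
  end.
Definition gen i := mkbz (gl i).
Definition wt (l : seq nat) (m : nat) : nat * nat :=
  match m with
  | 0 => (nth 0 l 0 + nth 0 l 1, nth 0 l 3 + nth 0 l 5)
  | 1 => (nth 0 l 5 + nth 0 l 6, nth 0 l 7 + nth 0 l 8)
  | _ => (nth 0 l 8 + nth 0 l 4, nth 0 l 2 + nth 0 l 0)
  end.
Lemma bweight_gen i k : bweight (gen i) k = wt (gl i) k.
Proof. by rewrite bwE; case: k => [[|[|[|m]]] hm] //=; rewrite /gen !ent_mk. Qed.

Lemma ent_gen i j : j < 9 -> ent (gen i) j = nth 0 (gl i) j.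
Proof. exact: ent_mk. Qed.

Definition le_bz (g t : bz) := forall j, j < 9 -> ent g j <= ent t j.
Definition used (g : bz) (k : 'I_3) := bweight g k != (0, 0).
Definition unitw (b : bool) : nat * nat := if b then (1, 0) else (0, 1).

Lemma le_gen9 i t :
  nth 0 (gl i) 0 <= ent t 0 -> nth 0 (gl i) 1 <= ent t 1 -> nth 0 (gl i) 2 <= ent t 2 ->
  nth 0 (gl i) 3 <= ent t 3 -> nth 0 (gl i) 4 <= ent t 4 -> nth 0 (gl i) 5 <= ent t 5 ->
  nth 0 (gl i) 6 <= ent t 6 -> nth 0 (gl i) 7 <= ent t 7 -> nth 0 (gl i) 8 <= ent t 8 ->
  le_bz (gen i) t.
Proof.
move=> ? ? ? ? ? ? ? ? ? j hj; rewrite ent_gen //.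
by do 9 (case: j hj => [|j] hj; first by []).
Qed.

Ltac le_tac := apply: le_gen9; simpl; lia.

Lemma loc_ext t (k : 'I_3) (b : bool) : hexagon t ->
  1 <= (if b then (bweight t k).1 else (bweight t k).2) ->
  exists i, le_bz (gen i) t /\ bweight (gen i) k = unitw b.
Proof.
case/hexE => h1 h2 h3; rewrite bwE.
case: k => [[|[|[|m]]] hm] //; case: b => /= H.
- case: (posnP (ent t 0)) => a0; last by exists GA; split; [le_tac|rewrite bweight_gen].
  case: (posnP (ent t 7)) => h0; last by exists GBH; split; [le_tac|rewrite bweight_gen].
  by exists GBEG; split; [le_tac|rewrite bweight_gen].
- case: (posnP (ent t 5)) => a0; last by exists GF; split; [le_tac|rewrite bweight_gen].
  case: (posnP (ent t 4)) => h0; last by exists GDE; split; [le_tac|rewrite bweight_gen].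
  by exists GCDH; split; [le_tac|rewrite bweight_gen].
- case: (posnP (ent t 5)) => a0; last by exists GF; split; [le_tac|rewrite bweight_gen].
  case: (posnP (ent t 2)) => h0; last by exists GCG; split; [le_tac|rewrite bweight_gen].
  by exists GBEG; split; [le_tac|rewrite bweight_gen].
- case: (posnP (ent t 8)) => a0; last by exists GI; split; [le_tac|rewrite bweight_gen].
  case: (posnP (ent t 1)) => h0; last by exists GBH; split; [le_tac|rewrite bweight_gen].
  by exists GCDH; split; [le_tac|rewrite bweight_gen].
- case: (posnP (ent t 8)) => a0; last by exists GI; split; [le_tac|rewrite bweight_gen].
  case: (posnP (ent t 3)) => h0; last by exists GDE; split; [le_tac|rewrite bweight_gen].
  by exists GBEG; split; [le_tac|rewrite bweight_gen].
- case: (posnP (ent t 0)) => a0; last by exists GA; split; [le_tac|rewrite bweight_gen].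
  case: (posnP (ent t 6)) => h0; last by exists GCG; split; [le_tac|rewrite bweight_gen].
  by exists GCDH; split; [le_tac|rewrite bweight_gen].
Qed.

Lemma le_bz_ents g t : le_bz g t ->
  [/\ ent g 0 <= ent t 0, ent g 1 <= ent t 1 & ent g 2 <= ent t 2] /\
  [/\ ent g 3 <= ent t 3, ent g 4 <= ent t 4 & ent g 5 <= ent t 5] /\
  [/\ ent g 6 <= ent t 6, ent g 7 <= ent t 7 & ent g 8 <= ent t 8].
Proof. by move=> H; do !split; apply: H. Qed.

Lemma bz_ext9 (t u : bz) :
  ent t 0 = ent u 0 -> ent t 1 = ent u 1 -> ent t 2 = ent u 2 ->
  ent t 3 = ent u 3 -> ent t 4 = ent u 4 -> ent t 5 = ent u 5 ->
  ent t 6 = ent u 6 -> ent t 7 = ent u 7 -> ent t 8 = ent u 8 -> t = u.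
Proof.
move=> ? ? ? ? ? ? ? ? ?; apply: bz_ext => j hj.
by do 9 (case: j hj => [|j] hj; first by []).
Qed.

Lemma loc_min t i : hexagon t -> le_bz t (gen i) -> t = zero_bz \/ t = gen i.
Proof.
case/hexE => h1 h2 h3 /le_bz_ents [[e0 e1 e2] [[e3 e4 e5] [e6 e7 e8]]].
move: h1 h2 h3; rewrite !ent_gen // in e0 e1 e2 e3 e4 e5 e6 e7 e8 *.
case: i e0 e1 e2 e3 e4 e5 e6 e7 e8 => /= *;
  (case: (posnP (ent t 0 + ent t 1 + ent t 2 + ent t 3 + ent t 4 + ent t 5 + ent t 6 + ent t 7 + ent t 8)) => Hs;
   [left; apply: bz_ext9; rewrite ?ent_zero; lia
   |right; apply: bz_ext9; rewrite ?ent_gen //=; lia]).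
Qed.

Definition pv3 (q0 q1 q2 : bool) (k : 'I_3) : bool := nth false [:: q0; q1; q2] k.

Ltac chk := split; [by case=> [[|[|[|?]]] ?] //; rewrite /used bweight_gen
                   | by rewrite bweight_gen].

Lemma loc_con_core q0 q1 q2 (k : 'I_3) b : pv3 q0 q1 q2 k -> 2 <= q0 + q1 + q2 ->
  exists i, (forall k', used (gen i) k' = pv3 q0 q1 q2 k') /\ bweight (gen i) k = unitw b.
Proof.
case: q0; case: q1; case: q2; case: k => [[|[|[|m]]] hm] //; case: b => /= Hp Hs;
 first [ done | exists GA; chk | exists GF; chk | exists GI; chk | exists GDE; chk
       | exists GCG; chk | exists GBH; chk | exists GBEG; chk | exists GCDH; chk ].
Qed.

Lemma loc_con (p : 'I_3 -> bool) k b : p k ->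
  (exists k1 k2, [/\ k1 != k2, p k1 & p k2]) ->
  exists i, (forall k', used (gen i) k' = p k') /\ bweight (gen i) k = unitw b.
Proof.
move=> pk [a [c [ac pa pc]]].
have E : forall k', p k' = pv3 (p k0) (p k1) (p k2) k'.
  by move=> k'; case: (ord3_cases k') => [->|[->|->]].
have Hk : pv3 (p k0) (p k1) (p k2) k by rewrite -E.
have H2 : 2 <= p k0 + p k1 + p k2.
  move: ac pa pc; case: (ord3_cases a) => [->|[->|->]]; case: (ord3_cases c) => [->|[->|->]] //;
  by case: (p k0); case: (p k1); case: (p k2).
have [i [Hu Hb]] := @loc_con_core (p k0) (p k1) (p k2) k b Hk H2.
by exists i; split => // k'; rewrite Hu -E.
Qed.

Lemma loc_uniq i i' k : (forall k', used (gen i) k' = used (gen i') k') ->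
  used (gen i) k -> bweight (gen i) k = bweight (gen i') k -> gen i = gen i'.
Proof.
move=> H; have h0 := H k0; have h1 := H k1; have h2 := H k2; move: h0 h1 h2; clear H.
rewrite /used !bweight_gen; case: k => [[|[|[|m]]] hm] //=;
case: i; case: i' => //=.
Qed.

Lemma gen_w i k : bweight (gen i) k = (0,0) \/ bweight (gen i) k = unitw true
   \/ bweight (gen i) k = unitw false.
Proof. by rewrite bweight_gen; case: i; case: k => [[|[|[|m]]] hm]; auto. Qed.

Lemma gen_used2 i : exists k k', [/\ k != k', used (gen i) k & used (gen i) k'].
Proof.
by case: i; first [ exists k0, k1; rewrite /used !bweight_gen; done
                  | exists k0, k2; rewrite /used !bweight_gen; done
                  | exists k1, k2; rewrite /used !bweight_gen; done].
Qed.

Lemma hex_gen i : hexagon (gen i).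
Proof. by case: i; rewrite /hexagon !ent_gen. Qed.
Lemma hex_zero : hexagon zero_bz.
Proof. by rewrite /hexagon !ent_zero. Qed.
Lemma bw_zero k : bweight zero_bz k = (0, 0).
Proof. by rewrite bwE; case: k => [[|[|[|m]]] hm]; rewrite /= !ent_zero. Qed.
Lemma gen_nz i : gen i <> zero_bz.
Proof.
move=> E; have [k [_ [_ u _]]] := gen_used2 i.
by move: u; rewrite /used E bw_zero.
Qed.

Lemma nz_side t : t <> zero_bz ->
  exists k b, 1 <= (if b then (bweight t k).1 else (bweight t k).2).
Proof.
move=> nz.
case: (posnP (ent t 0 + ent t 1)) => ?; last by exists k0, true; rewrite bwE.
case: (posnP (ent t 3 + ent t 5)) => ?; last by exists k0, false; rewrite bwE.
case: (posnP (ent t 5 + ent t 6)) => ?; last by exists k1, true; rewrite bwE.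
case: (posnP (ent t 7 + ent t 8)) => ?; last by exists k1, false; rewrite bwE.
case: (posnP (ent t 8 + ent t 4)) => ?; last by exists k2, true; rewrite bwE.
case: (posnP (ent t 2 + ent t 0)) => ?; last by exists k2, false; rewrite bwE.
by case: nz; apply: bz_ext9; rewrite !ent_zero; lia.
Qed.

Section Glob.
Variable T : tritree.
Local Notation V := (tv T).
Local Notation adj := (@tadj T).

Definition subbz (t g : bz) : bz := [ffun j => t j - g j].
Definition sub_as (w g : assignment T) : assignment T := [ffun v => subbz (w v) (g v)].
Definition le_as (g w : assignment T) := forall v, le_bz (g v) (w v).
Definition isg0 (t : bz) := t = zero_bz \/ exists i, t = gen i.

Lemma ent_sub t g j : ent (subbz t g) j = ent t j - ent g j.
Proof. by rewrite /ent ffunE. Qed.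
Lemma ent_add (w u : assignment T) v j : ent (add_assign w u v) j = ent (w v) j + ent (u v) j.
Proof. by rewrite /ent !ffunE. Qed.

Lemma le_bw g t k : le_bz g t ->
  (bweight g k).1 <= (bweight t k).1 /\ (bweight g k).2 <= (bweight t k).2.
Proof.
move=> /le_bz_ents [[? ? ?] [[? ? ?] [? ? ?]]]; rewrite !bwE.
case: k => [[|[|[|m]]] hm] //=; lia.
Qed.

Lemma bw_sub t g k : le_bz g t ->
  bweight (subbz t g) k = ((bweight t k).1 - (bweight g k).1, (bweight t k).2 - (bweight g k).2).
Proof.
move=> /le_bz_ents [[? ? ?] [[? ? ?] [? ? ?]]]; rewrite !bwE.
case: k => [[|[|[|m]]] hm] //=; rewrite !ent_sub; congr pair; lia.
Qed.

Lemma compat_intro (v v' : V) k k' g g' : trinode v -> trinode v' ->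
  tside v k = v' -> tside v' k' = v -> bweight g k = swapp (bweight g' k') -> compat v v' g g'.
Proof.
move=> tv tv' e1 e2 H kk kk' f1 f2.
have -> : kk = k by apply: (tside_inj' tv); rewrite f1 e1.
have -> : kk' = k' by apply: (tside_inj' tv'); rewrite f2 e2.
exact: H.
Qed.

Lemma inQ_compat (w : assignment T) v v' : inQ w -> trinode v -> trinode v' -> adj v v' ->
  compat v v' (w v) (w v').
Proof. by move=> [_ [_ H]] tv tv' _ k k' e1 e2; apply: H. Qed.

Lemma inQ_of (g : assignment T) :
  (forall v, trinode v -> hexagon (g v)) ->
  (forall v, ~~ trinode v -> g v = zero_bz) ->
  (forall v v', trinode v -> trinode v' -> adj v v' -> compat v v' (g v) (g v')) -> inQ g.
Proof.
move=> hx hz hc; split => //; split => // v v' k k' tv tv' e1 e2.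
apply: hc => //; rewrite -e1; exact: tside_adj'.
Qed.

Lemma inQ_sub (w g : assignment T) : inQ w -> inQ g -> le_as g w -> inQ (sub_as w g).
Proof.
move=> Qw Qg le; case: (Qw) => zw [hw cw]; case: (Qg) => zg [hg cg].
split; [|split].
- move=> v tv; rewrite ffunE zw // zg //; apply/ffunP => j; by rewrite !ffunE.
- move=> v tv; rewrite ffunE.
  case/hexE: (hw v tv) => ? ? ?; case/hexE: (hg v tv) => ? ? ?.
  have /le_bz_ents [[? ? ?] [[? ? ?] [? ? ?]]] := le v.
  by apply: hexI; rewrite !ent_sub; lia.
- move=> v v' k k' tv tv' e1 e2; rewrite !ffunE !bw_sub //.
  by rewrite (cw _ _ _ _ tv tv' e1 e2) (cg _ _ _ _ tv tv' e1 e2).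
Qed.

Lemma add_sub (w g : assignment T) : le_as g w -> w = add_assign g (sub_as w g).
Proof.
move=> le; apply/ffunP => v; apply: bz_ext => j hj.
rewrite ent_add ffunE ent_sub; have := le v j hj; lia.
Qed.

Lemma sub_zero (w g : assignment T) : le_as g w -> sub_as w g = zero_assign T -> w = g.
Proof.
move=> le E; apply/ffunP => v; apply: bz_ext => j hj.
have := le v j hj; have : ent (sub_as w g v) j = 0 by rewrite E ffunE ent_zero.
rewrite ffunE ent_sub; lia.
Qed.

Lemma assign_nz (w : assignment T) : w <> zero_assign T -> exists v, w v <> zero_bz.
Proof.
move=> nz; case: (boolP [exists v, w v != zero_bz]) => [/existsP[v /eqP] | H].
  by exists v.
case: nz; apply/ffunP => v; rewrite ffunE; apply/eqP.
by move/existsPn: H => /(_ v); rewrite negbK.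
Qed.


Lemma unitw_swap b : swapp (unitw (~~ b)) = unitw b.
Proof. by case: b. Qed.

Lemma le_zero t : le_bz zero_bz t.
Proof. by move=> j _; rewrite ent_zero. Qed.

Lemma sides (v v' : V) : trinode v -> trinode v' -> adj v v' ->
  exists k k', tside v k = v' /\ tside v' k' = v.
Proof.
move=> tv tv' vv; have [k Hk] := tside_surj tv vv.
have vv' : adj v' v by rewrite adj_sym.
have [k' Hk'] := tside_surj tv' vv'; by exists k, k'.
Qed.

Lemma inQ_zero (w : assignment T) v : inQ w -> ~~ trinode v -> w v = zero_bz.
Proof. by case=> z _; apply: z. Qed.
Lemma inQ_hex (w : assignment T) v : inQ w -> trinode v -> hexagon (w v).
Proof. by case=> _ [h _]; apply: h. Qed.

Lemma isg0_hex t : isg0 t -> hexagon t.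
Proof. by case=> [->|[i ->]]; [exact: hex_zero | exact: hex_gen]. Qed.

Lemma min_gen_flow (w : assignment T) : min_gen w -> forall v, isg0 (w v).
Proof.
move=> [Qw [nz nd]].
have [v0 nz0] := assign_nz nz.
have t0 : trinode v0.
  by apply/negPn/negP => nt; apply: nz0; apply: inQ_zero.
have hx0 := inQ_hex Qw t0.
have [k [b Hk]] := nz_side nz0.
have [i0 [le0 _]] := loc_ext hx0 Hk.
pose ok v γ := le_bz γ (w v) /\ isg0 γ.
have ext : forall v v' γ, trinode v -> trinode v' -> adj v v' -> ok v γ ->
     exists2 γ', ok v' γ' & compat v v' γ γ'.
  move=> v v' γ tv tv' vv' [leg Hg].
  have [kk [kk' [e1 e2]]] := sides tv tv' vv'.
  have zc : bweight γ kk = (0, 0) -> exists2 γ', ok v' γ' & compat v v' γ γ'.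
    move=> E; exists zero_bz; first by split; [exact: le_zero | left].
    by apply: (compat_intro tv tv' e1 e2); rewrite E bw_zero.
  case: Hg => [Eg|[i Eg]]; first by apply: zc; rewrite Eg bw_zero.
  have uc : forall bb, bweight γ kk = unitw bb -> exists2 γ', ok v' γ' & compat v v' γ γ'.
    move=> bb E; have [l1 l2] := le_bw kk leg.
    have cw := inQ_compat Qw tv tv' vv' e1 e2.
    have H : 1 <= (if ~~ bb then (bweight (w v') kk').1 else (bweight (w v') kk').2).
      move: l1 l2; rewrite E cw; case: bb {E} => /=; lia.
    have [i' [le' E']] := loc_ext (inQ_hex Qw tv') H.
    exists (gen i'); first by split=> //; right; exists i'.
    by apply: (compat_intro tv tv' e1 e2); rewrite E E' unitw_swap.
  case: (gen_w i kk) => [E|[E|E]]; rewrite -Eg in E.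
  - exact: zc.
  - exact: (uc true).
  - exact: (uc false).
have [g [g0 okg zg cg]] := @bfs T ok v0 (gen i0) t0 (conj le0 (or_intror (ex_intro _ i0 erefl))) ext.
have Qg : inQ g.
  apply: inQ_of => // v tv; apply: isg0_hex; by case: (okg v tv).
have leg : le_as g w.
  move=> v; case: (boolP (trinode v)) => tv; first by case: (okg v tv).
  by rewrite zg //; exact: le_zero.
case: (eqVneq (sub_as w g) (zero_assign T)) => [E|NE].
  move=> v; rewrite (sub_zero leg E); case: (boolP (trinode v)) => tv.
    by case: (okg v tv).
  by rewrite zg //; left.
exfalso; apply: nd; exists g, (sub_as w g); split; first done.
split; first exact: inQ_sub.
split; first by move=> E; apply: (@gen_nz i0); rewrite -g0 E ffunE.
split; first exact/eqP.
exact: add_sub.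
Qed.

Definition Ew (w : assignment T) (x y : V) := adj x y && (nz_from w x y || nz_from w y x).
Definition Sw (w : assignment T) : {set V} := [set x | [exists y, Ew w x y]].

Lemma Ew_sym w : symmetric (Ew w).
Proof. by move=> x y; rewrite /Ew adj_sym orbC. Qed.

Lemma Sw_l w x y : Ew w x y -> x \in Sw w.
Proof. by move=> H; rewrite inE; apply/existsP; exists y. Qed.
Lemma Sw_r w x y : Ew w x y -> y \in Sw w.
Proof. by rewrite Ew_sym; apply: Sw_l. Qed.

Lemma nz_from_side (w : assignment T) x y k : trinode x -> tside x k = y ->
  nz_from w x y = used (w x) k.
Proof.
move=> tx e; apply/existsP/idP => [[kk /andP[/eqP ek u]]|u].
  by have <- : kk = k by apply: (tside_inj' tx); rewrite ek e.
by exists k; rewrite e eqxx.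
Qed.

Lemma nz_from_nz (w : assignment T) x y : nz_from w x y -> w x <> zero_bz.
Proof. by case/existsP => k /andP[_ u] E; move: u; rewrite E bw_zero. Qed.

Lemma nz_from_tri (w : assignment T) x y : inQ w -> nz_from w x y -> trinode x.
Proof.
move=> Qw nz; apply/negPn/negP => tx; apply: (nz_from_nz nz); exact: inQ_zero.
Qed.

Lemma used_swap g g' k k' : bweight g k = swapp (bweight g' k') -> used g k = used g' k'.
Proof. by rewrite /used => ->; case: (bweight g' k') => [[|?] [|?]]. Qed.

Lemma nz_from_sym (w : assignment T) x y : inQ w -> trinode x -> trinode y -> adj x y ->
  nz_from w x y = nz_from w y x.
Proof.
move=> Qw tx ty xy; have [k [k' [e1 e2]]] := sides tx ty xy.
rewrite (nz_from_side _ tx e1) (nz_from_side _ ty e2).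
exact/used_swap/(inQ_compat Qw tx ty xy e1 e2).
Qed.

Lemma restrict_inQ (w : assignment T) (C : pred V) : inQ w ->
  (forall a b, Ew w a b -> C a = C b) -> inQ [ffun v => if C v then w v else zero_bz].
Proof.
move=> Qw cl; apply: inQ_of.
- by move=> v tv; rewrite ffunE; case: (C v); [exact: inQ_hex | exact: hex_zero].
- by move=> v tv; rewrite ffunE; case: (C v) => //; exact: inQ_zero.
- move=> v v' tv tv' vv; rewrite !ffunE.
  have [k [k' [e1 e2]]] := sides tv tv' vv.
  apply: (compat_intro tv tv' e1 e2).
  have cw := inQ_compat Qw tv tv' vv e1 e2.
  case Cv: (C v); case Cv': (C v'); rewrite ?bw_zero //.
  + have nE : ~~ Ew w v v' by apply/negP => /cl; rewrite Cv Cv'.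
    move: nE; rewrite /Ew vv /= negb_or (nz_from_side _ tv e1) (nz_from_side _ tv' e2).
    by case/andP => /negbNE/eqP -> _.
  + have nE : ~~ Ew w v v' by apply/negP => /cl; rewrite Cv Cv'.
    move: nE; rewrite /Ew vv /= negb_or (nz_from_side _ tv e1) (nz_from_side _ tv' e2).
    by case/andP => _ /negbNE/eqP ->.
Qed.

Lemma min_gen_conn (w : assignment T) : min_gen w ->
  forall x y, x \in Sw w -> y \in Sw w -> connect (Ew w) x y.
Proof.
move=> [Qw [nz nd]] x y.
pose C v := connect (Ew w) x v.
have cl : forall a b, Ew w a b -> C a = C b.
  move=> a b ab; apply/idP/idP => H.
    exact: connect_trans H (connect1 ab).
  by apply: connect_trans H (connect1 _); rewrite Ew_sym.
have cl' : forall a b, Ew w a b -> (predC C) a = (predC C) b.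
  by move=> a b /cl /= ->.
pose uC := [ffun v => if C v then w v else zero_bz].
pose uN := [ffun v => if (predC C) v then w v else zero_bz].
have QC : inQ uC := restrict_inQ Qw cl.
have QN : inQ uN := restrict_inQ Qw cl'.
have wE : w = add_assign uC uN.
  apply/ffunP => v; apply/ffunP => j; rewrite !ffunE /=.
  by case: (C v); rewrite ffunE ?addn0.
have nzv : forall a b, Ew w a b -> exists2 q, w q <> zero_bz & (q = a \/ q = b).
  move=> a b /andP[_ /orP[H|H]]; [exists a | exists b]; by [apply: nz_from_nz H | auto].
rewrite !inE => /existsP[x' Exx'] /existsP[y' Eyy'].
have [q nq Hq] := nzv _ _ Exx'.
have nC : uC <> zero_assign T.
  move=> E; apply: nq; have : uC q = zero_bz by rewrite E ffunE.
  rewrite ffunE; suff -> : C q by [].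
  by case: Hq => ->; [exact: connect0 | exact: connect1].
have nN : uN = zero_assign T.
  case: (eqVneq uN (zero_assign T)) => // /eqP NN; exfalso; apply: nd.
  by exists uC, uN.
have [q' nq' Hq'] := nzv _ _ Eyy'.
have Cq' : C q'.
  apply/negPn/negP => nCq; apply: nq'.
  have : uN q' = zero_bz by rewrite nN ffunE.
  by rewrite ffunE /= nCq.
by case: Hq' Cq' => ->; [|rewrite -(cl _ _ Eyy')].
Qed.

Lemma card2_of (A : {set V}) x y : x != y -> x \in A -> y \in A -> 2 <= #|A|.
Proof.
move=> xy xA yA; have <- : #|[set x; y]| = 2 by rewrite cards2 xy.
by apply: subset_leq_card; apply/subsetP => u; rewrite !inE => /orP[]/eqP->.
Qed.

Lemma flow_used (w : assignment T) v : inQ w -> (forall v, isg0 (w v)) -> w v <> zero_bz ->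
  exists k k', [/\ k != k', used (w v) k & used (w v) k'].
Proof. by move=> _ fl nz; case: (fl v) => [//|[i ->]]; apply: gen_used2. Qed.

Lemma Ew_from (w : assignment T) v k : trinode v -> used (w v) k -> Ew w v (tside v k).
Proof.
move=> tv u; rewrite /Ew tside_adj' //; apply/orP; left.
by rewrite (nz_from_side _ tv (erefl _)).
Qed.

Lemma Sw_nz (w : assignment T) x : inQ w -> trinode x -> x \in Sw w -> w x <> zero_bz.
Proof.
move=> Qw tx; rewrite inE => /existsP[z /andP[xz /orP[H|H]]]; first exact: nz_from_nz H.
have tz := nz_from_tri Qw H.
by apply: (@nz_from_nz _ _ z); rewrite (nz_from_sym Qw tx tz xz).
Qed.

Lemma min_gen_support (w : assignment T) : min_gen w ->
  proper_subtree (Sw w) /\ bz_support w = sub_edges (Sw w).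
Proof.
move=> mg; have fl := min_gen_flow mg; have cn := min_gen_conn mg.
case: mg => [Qw [nz _]].
have Esub : forall a b, Ew w a b -> [&& adj a b, a \in Sw w & b \in Sw w].
  by move=> a b ab; rewrite (Sw_l ab) (Sw_r ab); case/andP: ab => ->.
split; [split; [|split] |].
- have [v0 nz0] := assign_nz nz.
  have t0 : trinode v0 by apply/negPn/negP => nt; apply: nz0; apply: inQ_zero.
  have [k [_ [_ u _]]] := flow_used Qw fl nz0.
  have E := Ew_from t0 u.
  by apply: (card2_of (adj_neq (tside_adj' k t0))); [exact: Sw_l E | exact: Sw_r E].
- move=> x y xS yS; apply: connect_sub (cn _ _ xS yS) => a b ab.
  by apply: connect1; apply: Esub.
- move=> x xS d1; apply: notri_leaf; apply/negP => tx.
  have [k [k' [kk' u u']]] := flow_used Qw fl (Sw_nz Qw tx xS).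
  have E := Ew_from tx u; have E' := Ew_from tx u'.
  have ne : tside x k != tside x k'.
    by apply: contra kk' => /eqP /(tside_inj' tx) ->.
  have h1 : tside x k \in [set y in Sw w | adj x y] by rewrite inE (Sw_r E) tside_adj'.
  have h2 : tside x k' \in [set y in Sw w | adj x y] by rewrite inE (Sw_r E') tside_adj'.
  by have := card2_of ne h1 h2; rewrite d1.
- apply/setP => [[a b]]; rewrite /bz_support /sub_edges.
  have L : ((a,b) \in [set p | tadj p.1 p.2 && (nz_from w p.1 p.2 || nz_from w p.2 p.1)])
           = Ew w a b by rewrite inE.
  have R : ((a,b) \in [set p | [&& tadj p.1 p.2, p.1 \in Sw w & p.2 \in Sw w]])
           = [&& adj a b, a \in Sw w & b \in Sw w] by rewrite inE.
  rewrite L R.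
  apply/idP/idP => [H|/and3P[ab aS bS]]; first exact: Esub H.
  apply/negPn/negP => nE; change (is_true (~~ Ew w a b)) in nE.
  have subE : forall x y, Ew w x y -> adj x y by move=> x y /andP[].
  case/connectP: (cn _ _ aS bS) => p ep bE; move: ep bE.
  case/shortenP => q eq uq _ bE.
  case: q eq uq bE => [|c [|d q]] eq uq bE.
  - by move: ab; rewrite bE adj_irr.
  - by move: eq nE; rewrite /= bE andbT => ->.
  - have := @tacyc T a [:: c, d & q] (sub_path subE eq) uq isT.
    by rewrite -bE adj_sym ab.
Qed.

Lemma in_bz_support w a b : ((a, b) \in bz_support w) = Ew w a b.
Proof. by rewrite /bz_support inE. Qed.
Lemma in_sub_edges (S : {set V}) a b : ((a, b) \in sub_edges S) = [&& adj a b, a \in S & b \in S].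
Proof. by rewrite /sub_edges inE. Qed.

Lemma two_elems (A : {set V}) : 2 <= #|A| -> exists y z, [/\ y != z, y \in A & z \in A].
Proof.
move=> h; have [y yA] : exists y, y \in A by apply/set0Pn; rewrite -card_gt0; lia.
have [z zA] : exists z, z \in A :\ y.
  by apply/set0Pn; rewrite -card_gt0; move: (cardsD1 y A); rewrite yA; lia.
by move: zA; rewrite !inE => /andP[zy zA]; exists y, z; rewrite eq_sym zy.
Qed.

Lemma proper_nb (S : {set V}) x : proper_subtree S -> x \in S -> exists2 y, y \in S & adj x y.
Proof.
case=> c2 [cn _] xS.
have [z zS] : exists z, z \in S :\ x.
  by apply/set0Pn; rewrite -card_gt0; move: (cardsD1 x S); rewrite xS; lia.
move: zS; rewrite !inE => /andP[zx zS].
case/connectP: (cn _ _ xS zS) => [[|y p]] /=; first by move=> _ E; rewrite E eqxx in zx.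
by case/andP => /and3P[xy _ yS] _ _; exists y.
Qed.

Lemma proper_deg2 (S : {set V}) x : proper_subtree S -> x \in S -> trinode x ->
  exists y z, [/\ y != z, y \in S, z \in S, adj x y & adj x z].
Proof.
move=> PS xS tx.
have d2 : 2 <= #|[set y in S | adj x y]|.
  have [y yS xy] := proper_nb PS xS.
  have : 0 < #|[set y in S | adj x y]| by apply/card_gt0P; exists y; rewrite inE yS xy.
  case: PS => _ [_ lf]; case E: #|[set y in S | adj x y]| => [|[|m]] //.
  by move: (lf x xS E) => /leaf_notri; rewrite tx.
have [y [z [yz]]] := two_elems d2; rewrite !inE => /andP[yS xy] /andP[zS xz].
by exists y, z.
Qed.

Lemma proper_tri (S : {set V}) : 3 <= #|leaves T| -> proper_subtree S ->
  exists2 v, v \in S & trinode v.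
Proof.
move=> n3 PS; case: (PS) => c2 _.
have [x [_ [_ xS _]]] := two_elems c2.
have [y yS xy] := proper_nb PS xS.
case/orP: (leaf_or_tri x) => [lx|tx]; last by exists x.
case/orP: (leaf_or_tri y) => [ly|ty]; last by exists y.
by case: (no_leaf_edge n3 lx ly xy).
Qed.

Lemma S_tri_conn (S : {set V}) x y : proper_subtree S -> x \in S -> y \in S ->
  trinode x -> trinode y ->
  connect (fun a b => [&& adj a b, a \in S, b \in S, trinode a & trinode b]) x y.
Proof.
case=> _ [cn _] xS yS tx ty.
exact: (@tri_conn T (fun a => a \in S) x y (cn _ _ xS yS) tx ty).
Qed.

Lemma connect_closed (e : rel V) (P : V -> Prop) x y :
  connect e x y -> P x -> (forall a b, e a b -> P a -> P b) -> P y.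
Proof.
move=> /connectP[p ep ->] Px cl; elim: p x ep Px => //= c p IH x /andP[xc ep] Px.
exact: IH ep (cl _ _ xc Px).
Qed.

Definition Dp (S : {set V}) (v : V) (k : 'I_3) := (v \in S) && (tside v k \in S).
Definition okS (S : {set V}) (v : V) (γ : bz) := isg0 γ /\ forall k, used γ k = Dp S v k.

Lemma unused_w g k : ~~ used g k -> bweight g k = (0, 0).
Proof. by move/negbNE/eqP. Qed.

Lemma okS_out S v γ : okS S v γ -> v \notin S -> γ = zero_bz.
Proof.
move=> [[//|[i Eg]] Hu] vS; have [k [_ [_ u _]]] := gen_used2 i.
by move: u; rewrite -Eg Hu /Dp (negbTE vS).
Qed.

Lemma okS_gen S v γ k : okS S v γ -> Dp S v k -> exists i, γ = gen i.
Proof.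
move=> [[Eg|//] Hu] D; move: (Hu k); rewrite D Eg /used bw_zero //.
Qed.

Lemma Dp_two S v : proper_subtree S -> v \in S -> trinode v ->
  exists k1 k2, [/\ k1 != k2, Dp S v k1 & Dp S v k2].
Proof.
move=> PS vS tv; have [y [z [yz yS zS vy vz]]] := proper_deg2 PS vS tv.
have [k1 e1] := tside_surj tv vy; have [k2 e2] := tside_surj tv vz.
exists k1, k2; rewrite /Dp vS e1 e2 yS zS; split => //.
by apply: contra yz => /eqP E; rewrite -e1 -e2 E.
Qed.

Lemma okS_ext S : proper_subtree S ->
  forall v v' γ, trinode v -> trinode v' -> adj v v' -> okS S v γ ->
     exists2 γ', okS S v' γ' & compat v v' γ γ'.
Proof.
move=> PS v v' γ tv tv' vv' [Hg Hu].
have [kk [kk' [e1 e2]]] := sides tv tv' vv'.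
case: (boolP (v' \in S)) => v'S; last first.
  exists zero_bz.
    split; first by left.
    by move=> k; rewrite /used bw_zero /Dp (negbTE v'S).
  apply: (compat_intro tv tv' e1 e2); rewrite bw_zero unused_w //.
  by rewrite Hu /Dp e1 (negbTE v'S) andbF.
have [c1 [c2 [c12 D1 D2]]] := Dp_two PS v'S tv'.
have two : exists k1 k2, [/\ k1 != k2, Dp S v' k1 & Dp S v' k2] by exists c1, c2.
case: (boolP (v \in S)) => vS.
  have Dk : Dp S v kk by rewrite /Dp vS e1 v'S.
  have [i Ei] := okS_gen (conj Hg Hu) Dk.
  have Dk' : Dp S v' kk' by rewrite /Dp v'S e2 vS.
  have ub : exists b, bweight γ kk = unitw b.
    move: (Hu kk); rewrite Dk Ei /used; case: (gen_w i kk) => [->|[->|->]] //.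
      by exists true.
    by exists false.
  case: ub => b Eb.
  have [i' [Hu' Hb']] := loc_con (~~ b) Dk' two.
  exists (gen i'); first by split => //; right; exists i'.
  by apply: (compat_intro tv tv' e1 e2); rewrite Eb Hb' unitw_swap.
have [i' [Hu' _]] := loc_con true D1 two.
exists (gen i'); first by split => //; right; exists i'.
apply: (compat_intro tv tv' e1 e2).
rewrite !unused_w //.
  by rewrite Hu' /Dp e2 (negbTE vS) andbF.
by rewrite Hu /Dp (negbTE vS).
Qed.

Lemma construct S v0 k0 b : proper_subtree S -> trinode v0 -> Dp S v0 k0 ->
  exists g : assignment T,
    [/\ inQ g, (forall v, trinode v -> okS S v (g v)) & bweight (g v0) k0 = unitw b].
Proof.
move=> PS t0 D0; have v0S : v0 \in S by case/andP: D0.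
have two := Dp_two PS v0S t0.
have [i [Hu Hb]] := loc_con b D0 two.
have [g [g0 okg zg cg]] := @bfs T (okS S) v0 (gen i) t0
   (conj (or_intror (ex_intro _ i erefl)) Hu) (okS_ext PS).
exists g; split.
- apply: inQ_of => // v tv; apply: isg0_hex; by case: (okg v tv).
- exact: okg.
- by rewrite g0.
Qed.

Lemma nzf_S S (g : assignment T) x y : inQ g -> (forall v, trinode v -> okS S v (g v)) ->
  nz_from g x y = [&& trinode x, adj x y, x \in S & y \in S].
Proof.
move=> Qg ok; case: (boolP (trinode x)) => tx /=; last first.
  apply/negbTE/negP => H; have := nz_from_tri Qg H; by rewrite (negbTE tx).
case: (boolP (adj x y)) => xy /=.
  have [k e] := tside_surj tx xy.
  by rewrite (nz_from_side _ tx e) (proj2 (ok x tx)) /Dp e.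
apply/negbTE/negP => /existsP[k /andP[/eqP e _]]; move: xy; rewrite -e tside_adj' //.
Qed.

Lemma okS_support S (g : assignment T) : 3 <= #|leaves T| -> inQ g ->
  (forall v, trinode v -> okS S v (g v)) -> bz_support g = sub_edges S.
Proof.
move=> n3 Qg ok; apply/setP => [[a b]]; rewrite in_bz_support in_sub_edges /Ew.
rewrite !(nzf_S _ _ Qg ok).
case: (boolP (adj a b)) => //= ab; rewrite (adj_sym b a) ab /=.
case/orP: (leaf_or_tri a) => [la|ta].
  case/orP: (leaf_or_tri b) => [lb|tb]; first by case: (no_leaf_edge n3 la lb ab).
  by rewrite (negbTE (leaf_notri la)) tb; case: (a \in S); case: (b \in S).
by rewrite ta; case: (trinode b); case: (a \in S); case: (b \in S).
Qed.

Lemma le_zero_eq t : le_bz t zero_bz -> t = zero_bz.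
Proof. by move=> H; apply: bz_ext => j hj; have := H j hj; rewrite !ent_zero; lia. Qed.

Lemma le_add (u u' : assignment T) v : le_bz (u v) (add_assign u u' v).
Proof. by move=> j hj; rewrite ent_add; lia. Qed.

Lemma okS_zero_out S (g : assignment T) v : inQ g ->
  (forall v, trinode v -> okS S v (g v)) -> ~~ ((v \in S) && trinode v) -> g v = zero_bz.
Proof.
move=> Qg ok; case: (boolP (trinode v)) => tv; last by move=> _; apply: inQ_zero.
by rewrite andbT => vS; apply: okS_out (ok v tv) vS.
Qed.

Lemma okS_min S (g : assignment T) : 3 <= #|leaves T| -> proper_subtree S -> inQ g ->
  (forall v, trinode v -> okS S v (g v)) -> min_gen g.
Proof.
move=> n3 PS Qg ok.
have [v0 v0S t0] := proper_tri n3 PS.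
have [k1 [_ [_ D1 _]]] := Dp_two PS v0S t0.
split; first done; split.
  move=> E; have := proj2 (ok v0 t0) k1; rewrite D1 E ffunE /used bw_zero //.
move=> [u [u' [Qu [Qu' [nu [nu' E]]]]]].
have leu : forall v, le_bz (u v) (g v) by move=> v; rewrite E; apply: le_add.
have ug : forall v, (v \in S) -> trinode v -> u v <> zero_bz -> u v = g v.
  move=> v vS tv nz; have [i Ei] : exists i, g v = gen i.
    case: (ok v tv) => [[Eg|//] _]; by case: nz; apply: le_zero_eq; rewrite -Eg.
  case: (loc_min (inQ_hex Qu tv) (_ : le_bz (u v) (gen i))) => //; first by rewrite -Ei.
  by rewrite Ei.
have [v1 nz1] := assign_nz nu.
have t1 : trinode v1 by apply/negPn/negP => nt; apply: nz1; apply: inQ_zero.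
have v1S : v1 \in S.
  apply/negPn/negP => nS; apply: nz1; apply: le_zero_eq.
  by rewrite -(okS_out (ok v1 t1) nS).
have allS : forall v, v \in S -> trinode v -> u v = g v.
  move=> v vS tv.
  apply: (connect_closed (P := fun v => u v = g v) (S_tri_conn PS v1S vS t1 tv)).
    exact: ug.
  move=> a b /and5P[ab aS bS ta tb] Ea.
  have [k [k' [e1 e2]]] := sides ta tb ab.
  apply: ug => //.
  have Dk : Dp S a k by rewrite /Dp aS e1 bS.
  have ua : used (u a) k by rewrite Ea (proj2 (ok a ta)).
  have cu := inQ_compat Qu ta tb ab e1 e2.
  move=> Eb; move: ua; rewrite (used_swap cu) Eb /used bw_zero //.
have ueq : u = g.
  apply/ffunP => v; case: (boolP ((v \in S) && trinode v)) => [/andP[vS tv]|H].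
    exact: allS.
  have gz := okS_zero_out Qg ok H; rewrite gz; apply: le_zero_eq; rewrite -gz; exact: leu.
apply: nu'; apply/ffunP => v; apply: bz_ext => j hj.
have : ent (g v) j = ent (add_assign u u' v) j by rewrite -E.
by rewrite ent_add ueq ffunE ent_zero; lia.
Qed.

Lemma okS_uniq S (g g' : assignment T) v0 : proper_subtree S -> inQ g -> inQ g' ->
  (forall v, trinode v -> okS S v (g v)) -> (forall v, trinode v -> okS S v (g' v)) ->
  trinode v0 -> v0 \in S -> g v0 = g' v0 -> g = g'.
Proof.
move=> PS Qg Qg' ok ok' t0 v0S E0.
have allS : forall v, v \in S -> trinode v -> g v = g' v.
  move=> v vS tv.
  apply: (connect_closed (P := fun v => g v = g' v) (S_tri_conn PS v0S vS t0 tv)) => //.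
  move=> a b /and5P[ab aS bS ta tb] Ea.
  have [k [k' [e1 e2]]] := sides ta tb ab.
  have ba : adj b a by rewrite adj_sym.
  have Dk' : Dp S b k' by rewrite /Dp bS e2 aS.
  have [i Ei] := okS_gen (ok b tb) Dk'.
  have [i' Ei'] := okS_gen (ok' b tb) Dk'.
  rewrite Ei Ei'; apply: (loc_uniq (k := k')).
  - by move=> kk; rewrite -Ei -Ei' (proj2 (ok b tb)) (proj2 (ok' b tb)).
  - by rewrite -Ei (proj2 (ok b tb)).
  - rewrite -Ei -Ei' (inQ_compat Qg tb ta ba e2 e1) (inQ_compat Qg' tb ta ba e2 e1).
    by rewrite Ea.
apply/ffunP => v; case: (boolP ((v \in S) && trinode v)) => [/andP[vS tv]|H].
  exact: allS.
by rewrite (okS_zero_out Qg ok H) (okS_zero_out Qg' ok' H).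
Qed.

Lemma min_gen_okS S (w : assignment T) : min_gen w -> bz_support w = sub_edges S ->
  forall v, trinode v -> okS S v (w v).
Proof.
move=> mg sup; have fl := min_gen_flow mg; case: mg => [Qw _] v tv.
split; first exact: fl.
move=> k; set y := tside v k.
have vy : adj v y by apply: tside_adj'.
rewrite -(nz_from_side _ tv (erefl y)) /Dp -/y.
have := in_bz_support w v y; rewrite sup in_sub_edges vy /= => ->.
rewrite /Ew vy /=.
case/orP: (leaf_or_tri y) => [ly|ty].
  have -> : nz_from w y v = false.
    apply/negbTE/negP => H; have := nz_from_tri Qw H; by rewrite (negbTE (leaf_notri ly)).
  by rewrite orbF.
by rewrite (nz_from_sym Qw tv ty vy) orbb.
Qed.

Lemma per_subtree S : 3 <= #|leaves T| -> proper_subtree S ->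
  exists w1 w2 : assignment T,
       w1 <> w2 /\ min_gen w1 /\ min_gen w2 /\
       bz_support w1 = sub_edges S /\ bz_support w2 = sub_edges S /\
       (forall w, min_gen w -> bz_support w = sub_edges S -> w = w1 \/ w = w2).
Proof.
move=> n3 PS.
have [v0 v0S t0] := proper_tri n3 PS.
have [k0 [_ [_ D0 _]]] := Dp_two PS v0S t0.
have [g1 [Q1 ok1 b1]] := construct true PS t0 D0.
have [g2 [Q2 ok2 b2]] := construct false PS t0 D0.
exists g1, g2; split; first by move=> E; move: b1; rewrite E b2.
split; first exact: okS_min ok1.
split; first exact: okS_min ok2.
split; first exact: okS_support ok1.
split; first exact: okS_support ok2.
move=> w mg sup; have okw := min_gen_okS mg sup.
have Qw : inQ w by case: mg.
have [i Ei] := okS_gen (okw v0 t0) D0.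
have uw : used (w v0) k0 by rewrite (proj2 (okw v0 t0)).
have [j1 Ej1] := okS_gen (ok1 v0 t0) D0.
have [j2 Ej2] := okS_gen (ok2 v0 t0) D0.
have same : forall g, (forall v, trinode v -> okS S v (g v)) -> forall kk, used (w v0) kk = used (g v0) kk.
  by move=> g okg kk; rewrite (proj2 (okw v0 t0)) (proj2 (okg v0 t0)).
move: uw; rewrite Ei /used; case: (gen_w i k0) => [->|[E|E]] // _.
- left; apply: (okS_uniq PS Qw Q1 okw ok1 t0 v0S).
  rewrite Ei Ej1; apply: (loc_uniq (k := k0)).
  + by move=> kk; rewrite -Ei -Ej1 (same _ ok1).
  + by rewrite /used E.
  + by rewrite E -Ej1 b1.
- right; apply: (okS_uniq PS Qw Q2 okw ok2 t0 v0S).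
  rewrite Ei Ej2; apply: (loc_uniq (k := k0)).
  + by move=> kk; rewrite -Ei -Ej2 (same _ ok2).
  + by rewrite /used E.
  + by rewrite E -Ej2 b2.
Qed.

Definition eIn (C : {set V}) (a b : V) := [&& adj a b, a \in C & b \in C].
Definition avS (S : {set V}) (x a b : V) := [&& adj a b, a \in S, b \in S, a != x & b != x].

Lemma eIn_sym C : symmetric (eIn C).
Proof. by move=> a b; rewrite /eIn adj_sym; case: (a \in C); case: (b \in C); rewrite ?andbF. Qed.

Lemma avS_sym (S : {set V}) (x : V) : symmetric (avS S x).
Proof.
move=> a b; rewrite /avS adj_sym.
by case: (adj b a); case: (a \in S); case: (b \in S); case: (a != x); case: (b != x).
Qed.

Lemma path_restrict (e e' : rel V) (P : pred V) x p : path e x p -> P x ->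
  (forall a b, P a -> e a b -> P b && e' a b) -> path e' x p.
Proof.
move=> ep Px cl; elim: p x ep Px => //= c p IH x /andP[xc ep] Px.
by case/andP: (cl _ _ Px xc) => Pc -> /=; apply: IH.
Qed.

Lemma avS_to_self (S : {set V}) (x a : V) : connect (avS S x) a x -> a = x.
Proof.
move=> /connectP[p ep E]; case: p ep E => [|c p] ep E; first by rewrite E.
have Hall : all (fun b => b != x) (c :: p) by apply: path_all ep => a' b' /and5P[].
have xin : x \in c :: p by rewrite E /=; apply: mem_last.
by move: (allP Hall x xin); rewrite eqxx.
Qed.

Lemma avoid_step (S : {set V}) (u prev u' w : V) : adj u prev -> adj u u' -> u' != prev ->
  u \in S -> u' \in S ->
  connect (avS S u) u' w -> connect (avS S prev) u w.
Proof.
move=> up uu' np uS u'S cw.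
have noprev : forall b, connect (avS S u) u' b -> b != prev.
  move=> b cb; apply/negP => /eqP E; subst b.
  apply: (@no_cycle T u u' prev) => //.
  by apply: connect_sub cb => a b /and5P[ab _ _ au bu]; apply: connect1; rewrite ab au bu.
case/connectP: cw => p ep ->.
apply/connectP; exists (u' :: p) => //=.
rewrite /avS uu' uS u'S (adj_neq up) (noprev _ (connect0 _ _)) /=.
apply: (path_restrict (P := connect (avS S u) u')) ep (connect0 _ _) _.
move=> a b ca ab; have cb := connect_trans ca (connect1 ab); rewrite cb /=.
case/and5P: ab => ab aS bS _ _.
by rewrite /avS ab aS bS (noprev _ ca) (noprev _ cb).
Qed.

End Glob.

Section Glob2.
Variable T : tritree.
Local Notation V := (tv T).
Local Notation adj := (@tadj T).

Definition av (x a b : V) := [&& adj a b, a != x & b != x].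
Lemma av_sym x : symmetric (av x).
Proof. by move=> a b; apply/idP/idP => /and3P[h1 h2 h3]; rewrite /av adj_sym h1 h2 h3. Qed.

Lemma walk (S : {set V}) : proper_subtree S -> forall m u prev,
  #|[set w | connect (avS S prev) u w]| <= m -> u \in S -> prev \in S -> adj prev u ->
  exists2 l, l \in S :&: leaves T & connect (avS S prev) u l.
Proof.
move=> PS; elim=> [|m IH] u prev hc uS pS pu.
  have h : u \in [set w | connect (avS S prev) u w] by rewrite inE connect0.
  have : 0 < #|[set w | connect (avS S prev) u w]| by apply/card_gt0P; exists u.
  by rewrite leqn0 in hc; rewrite (eqP hc).
case: (boolP (u \in leaves T)) => lu.
  by exists u; [rewrite inE uS lu | exact: connect0].
have tu : trinode u by move: (leaf_or_tri u); rewrite (negbTE lu).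
have [y [z [yz yS zS uy uz]]] := proper_deg2 PS uS tu.
have [u' [u'S uu' u'p]] : exists u', [/\ u' \in S, adj u u' & u' != prev].
  case: (eqVneq y prev) => [E|yp]; last by exists y.
  by exists z; split => //; rewrite -E eq_sym.
have up : adj u prev by rewrite adj_sym.
have sub : [set w | connect (avS S u) u' w] \proper [set w | connect (avS S prev) u w].
  apply/properP; split.
    by apply/subsetP => w; rewrite !inE; apply: avoid_step.
  exists u; first by rewrite inE connect0.
  rewrite inE; apply/negP => /avS_to_self E; by rewrite E adj_irr in uu'.
have hc' : #|[set w | connect (avS S u) u' w]| <= m.
  by rewrite -ltnS; exact: leq_trans (proper_card sub) hc.
have [l lS cl] := IH u' u hc' u'S uS uu'.
by exists l => //; apply: (avoid_step up uu' u'p uS u'S).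
Qed.

Lemma walk' (S : {set V}) x y : proper_subtree S -> x \in S -> y \in S -> adj x y ->
  exists2 l, l \in S :&: leaves T & connect (av x) y l.
Proof.
move=> PS xS yS xy; have [l lS cl] := walk PS (leqnn _) yS xS xy.
exists l => //; apply: connect_sub cl => a b /and5P[ab _ _ ax bx].
by apply: connect1; rewrite /av ab ax bx.
Qed.

Lemma hull_sub (S C : {set V}) : proper_subtree S ->
  (forall a b, a \in C -> b \in C -> connect (eIn C) a b) ->
  S :&: leaves T \subset C -> S \subset C.
Proof.
move=> PS cC sub; apply/subsetP => x xS.
case: (boolP (x \in leaves T)) => lx.
  by apply: (subsetP sub); rewrite inE xS lx.
have tx : trinode x by move: (leaf_or_tri x); rewrite (negbTE lx).
have [y [z [yz yS zS xy xz]]] := proper_deg2 PS xS tx.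
have [l1 l1S c1] := walk' PS xS yS xy.
have [l2 l2S c2] := walk' PS xS zS xz.
have l1C := subsetP sub _ l1S; have l2C := subsetP sub _ l2S.
apply/negPn/negP => xC.
apply: (no_cycle xy xz yz).
apply: (connect_trans c1); apply: (connect_trans (y := l2)).
  apply: connect_sub (cC _ _ l1C l2C) => a b /and3P[ab aC bC].
  have ax : a != x by case: eqP aC => // ->; rewrite (negbTE xC).
  have bx : b != x by case: eqP bC => // ->; rewrite (negbTE xC).
  by apply: connect1; rewrite /av ab ax bx.
by rewrite (sym_connect_sym (av_sym x)).
Qed.

Lemma proper_leaves2 (S : {set V}) : proper_subtree S -> 2 <= #|S :&: leaves T|.
Proof.
move=> PS; case: (PS) => c2 _.
case E: #|S :&: leaves T| => [|[|m]] //.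
- move/eqP: E; rewrite cards_eq0 => /eqP E.
  have c0 : forall a b, a \in (set0 : {set V}) -> b \in set0 -> connect (eIn set0) a b.
    by move=> a b; rewrite inE.
  have := hull_sub PS c0; rewrite E sub0set => /(_ isT).
  by rewrite subset0 => /eqP S0; move: c2; rewrite S0 cards0.
- move/eqP/cards1P: E => [l El].
  have cC : forall a b, a \in [set l] -> b \in [set l] -> connect (eIn [set l]) a b.
    by move=> a b /set1P -> /set1P ->; apply: connect0.
  have := hull_sub PS cC; rewrite El subxx => /(_ isT) /subset_leq_card.
  by rewrite cards1 => h; have := leq_trans c2 h.
Qed.

Lemma proper_inj (S1 S2 : {set V}) : proper_subtree S1 -> proper_subtree S2 ->
  S1 :&: leaves T = S2 :&: leaves T -> S1 = S2.
Proof.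
move=> P1 P2 E; apply/eqP; rewrite eqEsubset; apply/andP; split.
- apply: hull_sub P1 _ _; first by case: P2 => _ [].
  by rewrite E subsetIl.
- apply: hull_sub P2 _ _; first by case: P1 => _ [].
  by rewrite -E subsetIl.
Qed.

Lemma exit_edge2 (e : rel V) (P : pred V) a b :
  connect e a b -> P a -> ~~ P b ->
  exists u v, [/\ P u, ~~ P v, e u v & connect (fun c d => [&& e c d, P c & P d]) a u].
Proof.
move=> /connectP[p ep ->{b}]; elim: p a ep => [|c p IH] a /=; first by move=> _ ->.
move=> /andP[eac ep] Pa; case Pc: (P c).
  move=> H; have [u [v [Pu Pv euv cu]]] := IH c ep Pc H.
  exists u, v; split => //; apply: connect_trans cu.
  by apply: connect1; rewrite eac Pa Pc.
by move=> _; exists a, c; rewrite Pa Pc eac; split => //; apply: connect0.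
Qed.

Definition connS (C : {set V}) := forall a b, a \in C -> b \in C -> connect (eIn C) a b.

Lemma remove_conn (C : {set V}) x : connS C -> x \in C ->
  #|[set y in C | adj x y]| = 1 -> connS (C :\ x).
Proof.
move=> cC xC d1.
have [y Ey] := cards1P (introT eqP d1).
have : y \in [set y in C | adj x y] by rewrite Ey set11.
rewrite inE => /andP[yC xy].
have nbr : forall u, u \in C -> adj x u -> u = y.
  by move=> u uC xu; apply/set1P; rewrite -Ey inE uC xu.
have yx : y != x by rewrite eq_sym adj_neq.
have toy : forall a, a \in C :\ x -> connect (eIn (C :\ x)) a y.
  move=> a; rewrite in_setD1 => /andP[ax aC].
  have nxx : ~~ (x != x) by rewrite negbK.
  have [u [v [ux /negPn/eqP vx euv cu]]] :=
    @exit_edge2 (eIn C) (fun v => v != x) a x (cC _ _ aC xC) ax nxx.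
  subst v; case/and3P: euv => uxa uC _.
  rewrite -(nbr u uC) ?(adj_sym x u) //.
  apply: connect_sub cu => c d /and3P[/and3P[cd c_C d_C] cx dx].
  by apply: connect1; rewrite /eIn cd !in_setD1 cx c_C dx d_C.
move=> a b aC bC; apply: connect_trans (toy a aC) _.
by rewrite (sym_connect_sym (@eIn_sym T _)); apply: toy.
Qed.

Lemma nb_conn (C : {set V}) x : 2 <= #|C| -> connS C -> x \in C ->
  exists2 y, y \in C & adj x y.
Proof.
move=> c2 cn xC.
have [z zS] : exists z, z \in C :\ x.
  by apply/set0Pn; rewrite -card_gt0; move: (cardsD1 x C); rewrite xC; lia.
move: zS; rewrite !inE => /andP[zx zS].
case/connectP: (cn _ _ xC zS) => [[|y p]] /=; first by move=> _ E; rewrite E eqxx in zx.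
by case/andP => /and3P[xy _ yS] _ _; exists y.
Qed.

Lemma shrink (L : {set V}) : L \subset leaves T -> 2 <= #|L| ->
  forall m (C : {set V}), #|C| <= m -> L \subset C -> connS C ->
  exists S, proper_subtree S /\ S :&: leaves T = L.
Proof.
move=> Ll L2; elim=> [|m IH] C cm LC cC.
  by have := leq_trans L2 (leq_trans (subset_leq_card LC) cm).
case: (boolP [exists x, [&& x \in C, x \notin L & #|[set y in C | adj x y]| == 1]]).
  case/existsP => x /and3P[xC xL /eqP d1].
  apply: (IH (C :\ x)).
  - by move: (cardsD1 x C); rewrite xC add1n => E; move: cm; rewrite E ltnS.
  - apply/subsetP => l lL; rewrite in_setD1 (subsetP LC _ lL) andbT.
    by apply: contraNneq xL => <-.
  - exact: remove_conn.
move/existsPn => nx.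
have C2 : 2 <= #|C| := leq_trans L2 (subset_leq_card LC).
have deg1L : forall x, x \in C -> #|[set y in C | adj x y]| = 1 -> x \in L.
  move=> x xC d1; move: (nx x); rewrite xC d1 eqxx andbT /=.
  by move/negbNE.
exists C; split.
  split => //; split => // x xC d1.
  exact: (subsetP Ll _ (deg1L x xC d1)).
apply/setP => x; rewrite inE; apply/idP/idP => [/andP[xC lx]|xL].
  apply: deg1L => //.
  have le1 : #|[set y in C | adj x y]| <= 1.
    have := subset_leq_card (_ : [set y in C | adj x y] \subset [set y | adj x y]).
    rewrite inE in lx; move/eqP: lx; rewrite /degree => -> ; apply.
    by apply/subsetP => u; rewrite !inE => /andP[].
  have [y yC xy] := nb_conn C2 cC xC.
  have : 0 < #|[set y in C | adj x y]| by apply/card_gt0P; exists y; rewrite inE yC xy.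
  by case: #|_| le1 => [|[|?]].
by rewrite (subsetP LC _ xL) (subsetP Ll _ xL).
Qed.

Lemma surj_leaves (L : {set V}) : L \subset leaves T -> 2 <= #|L| ->
  exists S, proper_subtree S /\ S :&: leaves T = L.
Proof.
move=> Ll L2; apply: (shrink Ll L2 (leqnn #|[set: V]|)).
  exact: subsetT.
move=> a b _ _; apply: connect_sub (tconn a b) => c d cd.
by apply: connect1; rewrite /eIn cd !inE.
Qed.

Definition proper_b (S : {set V}) : bool :=
  [&& 2 <= #|S|,
      [forall x, forall y, (x \in S) ==> (y \in S) ==> connect (eIn S) x y] &
      [forall x, (x \in S) ==> (#|[set y in S | adj x y]| == 1) ==> (x \in leaves T)]].

Lemma proper_bP S : reflect (proper_subtree S) (proper_b S).
Proof.
apply: (iffP and3P) => [[c2 /forallP cn /forallP lf]|[c2 [cn lf]]].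
  split => //; split.
    by move=> x y xS yS; move: (cn x) => /forallP /(_ y); rewrite xS yS.
  by move=> x xS d1; move: (lf x); rewrite xS d1 eqxx.
split => //.
  by apply/forallP => x; apply/forallP => y; apply/implyP => xS; apply/implyP => yS; apply: cn.
by apply/forallP => x; apply/implyP => xS; apply/implyP => /eqP d1; apply: lf.
Qed.

Lemma count_sets (X : {set V}) :
  #|[set L : {set V} | (L \subset X) && (2 <= #|L|)]| = 2 ^ #|X| - #|X| - 1.
Proof.
have E1 : [set L : {set V} | (L \subset X) && (2 <= #|L|)] = powerset X :&: [set L : {set V} | 2 <= #|L|].
  by apply/setP => L; rewrite !inE.
have E2 : powerset X :\: [set L : {set V} | 2 <= #|L|] = set0 |: [set [set x] | x in X].
  apply/setP => L; rewrite !inE; apply/idP/idP.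
    case/andP => L2 LX; move: L2; rewrite -ltnNge ltnS leq_eqVlt ltnS leqn0.
    case/orP => [/cards1P[x Lx]|]; last by rewrite cards_eq0 => ->.
    apply/orP; right; apply/imsetP; exists x => //.
    by move: LX; rewrite Lx sub1set.
  case/orP => [/eqP ->|/imsetP[x xX ->]]; first by rewrite cards0 sub0set.
  by rewrite cards1 sub1set xX.
have := cardsID [set L : {set V} | 2 <= #|L|] (powerset X).
rewrite E2 card_powerset cardsU1 card_in_imset; last by move=> x y _ _; apply: set1_inj.
have -> : (set0 : {set V}) \notin [set [set x] | x in X].
  apply/imsetP => [[x _ E]]; by move: (set11 x); rewrite -E inE.
rewrite E1 => <-; rewrite /=; lia.
Qed.

Lemma count_proper : 3 <= #|leaves T| ->
  #|[set S : {set V} | proper_b S]| = 2 ^ #|leaves T| - #|leaves T| - 1.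
Proof.
move=> n3; rewrite -count_sets.
rewrite -(@card_in_imset _ _ (fun S => S :&: leaves T)); last first.
  by move=> S1 S2; rewrite !inE => /proper_bP P1 /proper_bP P2; apply: proper_inj.
apply: eq_card => L; rewrite [in RHS]inE; apply/imsetP/idP.
  case=> S; rewrite inE => /proper_bP PS ->.
  by rewrite subsetIr proper_leaves2.
case/andP => Ll L2; have [S [PS E]] := surj_leaves Ll L2.
by exists S => //; rewrite inE; apply/proper_bP.
Qed.

Lemma sub_edges_inj (S1 S2 : {set V}) : proper_subtree S1 -> proper_subtree S2 ->
  sub_edges S1 = sub_edges S2 -> S1 = S2.
Proof.
have H : forall A B : {set V}, proper_subtree A -> sub_edges A = sub_edges B -> A \subset B.
  move=> A B PA E; apply/subsetP => x xA; have [y yA xy] := proper_nb PA xA.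
  have : (x, y) \in sub_edges A by rewrite in_sub_edges xy xA yA.
  by rewrite E in_sub_edges => /and3P[].
move=> P1 P2 E; apply/eqP; rewrite eqEsubset (H _ _ P1 E) (H _ _ P2 (esym E)).
by [].
Qed.

Lemma build_list : 3 <= #|leaves T| -> forall ss : seq {set V}, uniq ss ->
  (forall S, S \in ss -> proper_subtree S) ->
  exists s : seq (assignment T),
    [/\ uniq s, (forall w, w \in s <-> (min_gen w /\ exists2 S, S \in ss & bz_support w = sub_edges S))
      & size s = 2 * size ss].
Proof.
move=> n3; elim=> [|S ss IH] /=.
  move=> _ _; exists [::]; split => //.
  by move=> w; split => [//|[_ [S]]].
case/andP => Sss uss PS.
have PS0 : proper_subtree S by apply: PS; rewrite mem_head.
have PSs : forall S', S' \in ss -> proper_subtree S' by move=> S' h; apply: PS; rewrite inE h orbT.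
have [s' [us' ms' ss']] := IH uss PSs.
have [w1 [w2 [w12 [m1 [m2 [s1 [s2 un]]]]]]] := per_subtree n3 PS0.
have notin : forall w, bz_support w = sub_edges S -> w \notin s'.
  move=> w sw; apply/negP => /ms' [_ [S' S'ss sw']].
  have PS' : proper_subtree S' by apply: PS; rewrite inE S'ss orbT.
  have ES : S = S' by apply: sub_edges_inj => //; rewrite -sw -sw'.
  by move: Sss; rewrite ES S'ss.
exists [:: w1, w2 & s']; split.
- rewrite /= inE negb_or us' notin // notin // andbT /= andbT.
  by apply/eqP.
- move=> w; rewrite !inE; split.
    case/orP => [/eqP ->|/orP[/eqP ->|ws]].
    + by split => //; exists S; rewrite ?mem_head.
    + by split => //; exists S; rewrite ?mem_head.
    + case: (ms' w) => /(_ ws) [mg [S' S'ss sw]] _.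
      by split => //; exists S' => //; rewrite inE S'ss orbT.
  case=> mg [S0]; rewrite inE => /orP[/eqP ->|S0ss] sw.
    by case: (un w mg sw) => ->; rewrite eqxx ?orbT.
  by apply/orP; right; apply/orP; right; apply/ms'; split => //; exists S0.
- by rewrite /= ss' mulnS.
Qed.

End Glob2.

Unset Implicit Arguments.

Theorem mainTheorem2 (T : tritree) (n : nat) :
  n = #|leaves T| -> (3 <= n)%N ->
  (forall S : {set tv T}, proper_subtree S ->
     exists w1 w2 : assignment T,
       w1 <> w2 /\ min_gen w1 /\ min_gen w2 /\
       bz_support w1 = sub_edges S /\ bz_support w2 = sub_edges S /\
       (forall w, min_gen w -> bz_support w = sub_edges S -> w = w1 \/ w = w2))
  /\ (forall w : assignment T, min_gen w ->
        exists S : {set tv T}, proper_subtree S /\ bz_support w = sub_edges S)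
  /\ (exists s : seq (assignment T),
        [/\ uniq s, (forall w, min_gen w <-> w \in s) &
            size s = (2 * (2 ^ n - n - 1))%N]).
Proof.
move=> -> n3; split; first by move=> S PS; apply: per_subtree.
split.
  by move=> w mg; exists (Sw w); apply: min_gen_support.
have memP : forall S, S \in enum [set S : {set tv T} | proper_b S] -> proper_subtree S.
  by move=> S; rewrite mem_enum inE => /proper_bP.
have [s [us ms ss]] := build_list n3 (enum_uniq _) memP.
exists s; split => //.
- move=> w; split => [mg|/ms [] //].
  have [PS sw] := min_gen_support mg.
  apply/ms; split => //; exists (Sw w) => //.
  by rewrite mem_enum inE; apply/proper_bP.
- by rewrite ss -cardE count_proper.
Qed.
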